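(* Let $ABC$ be a triangle and let $P$ be a point. Let $H_A, H_B, H_C$ be the orthocenters of the triangles $BPC$, $CPA$, $PAB$ respectively. Let $G_A, G_B, G_C$ be the centroids of the triangles $AH_BH_C$, $BH_CH_A$, $CH_AH_B$ respectively, and let $G$ be the centroid of $ABC$. Then $G_A, G_B, G_C, G$ lie on a circle.
   Context: All triangles involved are assumed nondegenerate. *)

(* Defs.v *)
From HB Require Import structures.
From mathcomp Require Import all_boot all_order all_algebra.
Set Implicit Arguments. Unset Strict Implicit. Unset Printing Implicit Defensive.
Import Order.TTheory GRing.Theory Num.Theory.
Local Open Scope ring_scope.

Definition pt (R : realFieldType) := (R * R)%type.

Section Geo.
Variable R : realFieldType.

Definition pdot (u v : pt R) : R := u.1 * v.1 + u.2 * v.2.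
Definition vsub (u v : pt R) : pt R := (u.1 - v.1, u.2 - v.2).
Definition sqdist (u v : pt R) : R := pdot (vsub u v) (vsub u v).

(* signed (doubled) area; nonzero iff the triangle ABC is nondeg_triangle *)
Definition area2 (A B C : pt R) : R :=
  (B.1 - A.1) * (C.2 - A.2) - (B.2 - A.2) * (C.1 - A.1).
Definition nondeg_triangle (A B C : pt R) : Prop := area2 A B C != 0.

(* H is the orthocenter of triangle ABC: it lies on the altitudes from A
   and from B (hence, for a nondeg_triangle triangle, on all three). *)
Definition is_orthocenter (H A B C : pt R) : Prop :=
  pdot (vsub H A) (vsub B C) = 0 /\ pdot (vsub H B) (vsub C A) = 0.

Definition centroid (A B C : pt R) : pt R :=
  ((A.1 + B.1 + C.1) / 3%:R, (A.2 + B.2 + C.2) / 3%:R).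

Definition concyclic4 (W X Y Z : pt R) : Prop :=
  exists (O : pt R) (r : R), 0 < r /\
    sqdist W O = r /\ sqdist X O = r /\ sqdist Y O = r /\ sqdist Z O = r.
End Geo.

(* Main.v *)
Require Import Defs.
From HB Require Import structures.
From mathcomp Require Import all_boot all_order all_algebra.
From mathcomp Require Import ring lra.
Import Order.TTheory GRing.Theory Num.Theory.
Local Open Scope ring_scope.

Set Implicit Arguments.
Section S.
Variable R : realFieldType.

Definition orthF (A B C : pt R) : pt R :=
  let d := area2 A B C in
  let u := vsub B C in let v := vsub C A in
  let e := pdot A u in let f := pdot B v in
  ((e * v.2 - f * u.2) / d, (u.1 * f - v.1 * e) / d).

Lemma lin2 (a b : R) {x y z : R} : x = 0 -> y = 0 -> z = a * x + b * y -> z = 0.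
Proof. by move=> -> -> ->; rewrite !mulr0 addr0. Qed.

Lemma orthoE (H A B C : pt R) : is_orthocenter H A B C -> area2 A B C != 0 ->
  H = orthF A B C.
Proof.
case: H => h1 h2; case: A => a1 a2; case: B => b1 b2; case: C => c1 c2.
rewrite /is_orthocenter /orthF /area2 /pdot /vsub /= => [[e1 e2]] d.
congr (_, _); apply: (mulIf d); rewrite mulfVK //; apply/eqP; rewrite -subr_eq0; apply/eqP.
  by refine (lin2 (c2 - a2) (- (b2 - c2)) e1 e2 _); ring.
by refine (lin2 (- (c1 - a1)) (b1 - c1) e1 e2 _); ring.
Qed.

Definition cross (u v : pt R) : R := u.1 * v.2 - u.2 * v.1.

Definition mid (u v : pt R) : pt R := ((u.1 + v.1) / 2, (u.2 + v.2) / 2).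

Lemma circE (X G Q : pt R) :
  pdot (vsub X G) (vsub X Q) = 0 -> sqdist X (mid G Q) = sqdist G (mid G Q).
Proof.
case: X => x1 x2; case: G => g1 g2; case: Q => q1 q2.
rewrite /sqdist /pdot /vsub /mid /= => h.
apply/eqP; rewrite -subr_eq0; apply/eqP; rewrite -[RHS]h; field; by rewrite ?pnatr_eq0.
Qed.

Lemma deg1 (X O : pt R) : sqdist X O = 0 -> sqdist X (O.1 + 1, O.2) = 1.
Proof.
case: X => x1 x2; case: O => o1 o2; rewrite /sqdist /pdot /vsub /= => h.
have s1 := sqr_ge0 (x1 - o1); have s2 := sqr_ge0 (x2 - o2).
rewrite !expr2 in s1 s2.
have h1 : x1 - o1 = 0.
  apply/eqP; rewrite -sqrf_eq0 expr2; apply/eqP; lra.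
have h2 : x2 - o2 = 0.
  apply/eqP; rewrite -sqrf_eq0 expr2; apply/eqP; lra.
have -> : x1 - (o1 + 1) = -1 by rewrite opprD addrA h1 sub0r.
by rewrite h2 mulr0 addr0 mulrNN mulr1.
Qed.

Lemma key (a1 a2 b1 b2 c1 c2 p1 p2 : R) :
  let A := (a1, a2) in let B := (b1, b2) in let C := (c1, c2) in let P := (p1, p2) in
  area2 B P C != 0 -> area2 C P A != 0 -> area2 P A B != 0 ->
  let HA := orthF B P C in let HB := orthF C P A in let HC := orthF P A B in
  let GA := centroid A HB HC in let GB := centroid B HC HA in
  let GC := centroid C HA HB in let G := centroid A B C in
  let l := cross (vsub GB GA) (vsub B P) / cross (vsub A P) (vsub B P) in
  let Q := (GA.1 + l * (A.1 - P.1), GA.2 + l * (A.2 - P.2)) in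
  [/\ pdot (vsub GA G) (vsub GA Q) = 0, pdot (vsub GB G) (vsub GB Q) = 0 &
  pdot (vsub GC G) (vsub GC Q) = 0].
Proof.
move=> A B C P dA dB dC HA HB HC GA GB GC G l Q.
have dP : cross (vsub A P) (vsub B P) != 0.
  by move: dC; rewrite /area2 /cross /=.
move: dA dB dC dP.
rewrite /Q /l /GA /GB /GC /G /HA /HB /HC /centroid /orthF /area2 /cross /pdot /vsub /= => dA dB dC dP.
by split; field; rewrite ?dA ?dB ?dC.
Qed.
End S.

Theorem theorem3p1 (R : realFieldType) (A B C P HA HB HC : pt R) :
  nondeg_triangle A B C ->
  nondeg_triangle B P C -> nondeg_triangle C P A -> nondeg_triangle P A B ->
  is_orthocenter HA B P C -> is_orthocenter HB C P A -> is_orthocenter HC P A B ->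
  nondeg_triangle A HB HC -> nondeg_triangle B HC HA -> nondeg_triangle C HA HB ->
  concyclic4 (centroid A HB HC) (centroid B HC HA) (centroid C HA HB)
             (centroid A B C).
Proof.
rewrite /nondeg_triangle => _ dA dB dC oA oB oC _ _ _.
rewrite (orthoE oA dA) (orthoE oB dB) (orthoE oC dC); clear oA oB oC.
move: dA dB dC; case: A => a1 a2; case: B => b1 b2; case: C => c1 c2; case: P => p1 p2.
move=> dA dB dC.
have [kA kB kC] := @key R a1 a2 b1 b2 c1 c2 p1 p2 dA dB dC.
set GA := centroid (a1, a2) (orthF _ _ _) _ in kA kB kC *.
set GB := centroid (b1, b2) _ _ in kA kB kC *.
set GC := centroid (c1, c2) _ _ in kA kB kC *.
set G := centroid (a1, a2) (b1, b2) (c1, c2) in kA kB kC *.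
set Q := (_, _) in kA kB kC.
have eA := circE _ _ _ kA; have eB := circE _ _ _ kB; have eC := circE _ _ _ kC.
have [r0|rn0] := eqVneq (sqdist G (mid G Q)) 0.
  exists ((mid G Q).1 + 1, (mid G Q).2), 1; split; first exact: ltr01.
  by split; [|split; [|split]]; rewrite deg1 // ?eA ?eB ?eC.
exists (mid G Q), (sqdist G (mid G Q)); split => //.
rewrite lt0r rn0 /= /sqdist /pdot; nra.
Qed.
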